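(* Assume the standing hypotheses (H). Then for every part $A$ of $G$ and every color $c$, at most two vertices $v\in A$ satisfy $c\in L(v)$.
   Context: A list assignment $L$ assigns to each vertex $v$ a set $L(v)$ of colors; an $L$-coloring is a proper coloring $f$ with $f(v)\in L(v)$ for all $v$; $\mathrm{ch}$ denotes choice number and $\chi$ chromatic number. A part of a complete multipartite graph is one of its maximal stable sets. Standing hypotheses (H): $k\ge1$ and $n\ge 2k+2$ are integers; $G$ is a complete $k$-partite graph (exactly $k$ nonempty parts) on $n$ vertices; $L$ is a list assignment for $G$ with $|L(v)|\ge\lceil (n+k-1)/3\rceil$ for every vertex $v$; $G$ has no $L$-coloring; $\left|\bigcup_{v\in V(G)}L(v)\right|\le n-1$; and every graph $H$ with fewer than $n$ vertices satisfies $\mathrm{ch}(H)\le\max\{\chi(H),\lceil(|V(H)|+\chi(H)-1)/3\rceil\}$. *)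

(* Defs.v *)
(* Finite simple graphs are symmetric irreflexive relations
   on a finType; colors are natural numbers; a list is a seq nat whose
   size (as a set of colors) is size (undup _). *)
From mathcomp Require Import all_boot.
Set Implicit Arguments. Unset Strict Implicit. Unset Printing Implicit Defensive.

Definition simple_graph (T : finType) (e : rel T) : Prop :=
  symmetric e /\ irreflexive e.

Definition lsize (s : seq nat) : nat := size (undup s).

Definition proper (T : finType) (e : rel T) (f : T -> nat) : Prop :=
  forall x y, e x y -> f x != f y.

Definition L_colorable (T : finType) (e : rel T) (L : T -> seq nat) : Prop :=
  exists f : T -> nat, proper e f /\ forall v, f v \in L v.

Definition k_colorable (T : finType) (e : rel T) (k : nat) : Prop :=
  exists f : T -> 'I_k, forall x y, e x y -> f x != f y.

Definition k_choosable (T : finType) (e : rel T) (m : nat) : Prop :=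
  forall L : T -> seq nat, (forall v, m <= lsize (L v)) -> L_colorable e L.

Definition chromatic_number (T : finType) (e : rel T) (chi : nat) : Prop :=
  k_colorable e chi /\ forall k, k_colorable e k -> chi <= k.

Definition choice_number (T : finType) (e : rel T) (c : nat) : Prop :=
  k_choosable e c /\ forall m, k_choosable e m -> c <= m.

Definition ceil3 (a : nat) : nat := (a + 2) %/ 3.

(* complete multipartite graph on 'I_n with part map p : 'I_n -> 'I_k:
   u ~ v iff they lie in different parts. *)
Definition cmp_adj (n k : nat) (p : 'I_n -> 'I_k) : rel 'I_n :=
  fun u v => p u != p v.

(* Main.v *)
Require Import Defs.
From mathcomp Require Import all_boot.
From mathcomp Require Import zify.
From Stdlib Require Import Classical.

Lemma ex_min (P : nat -> Prop) :
  (exists n, P n) -> exists n, P n /\ forall m, P m -> n <= m.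
Proof.
move=> [n Pn].
suff H : forall N n, n <= N -> P n -> exists n, P n /\ forall m, P m -> n <= m.
  exact: (H n n (leqnn n) Pn).
elim=> [|N IH] n0 hn P0.
  exists n0; split=> // m _; lia.
have [[m [hm Pm]]|hno] := classic (exists m, m < n0 /\ P m).
  apply: (IH m) => //; lia.
exists n0; split=> // m Pm.
case: (leqP n0 m) => // hlt; exfalso; apply: hno; by exists m.
Qed.

Lemma greedy (T : finType) (L : T -> seq nat) (s : seq T) :
  uniq s -> (forall v, size s <= lsize (L v)) ->
  exists f : T -> nat, (forall v, v \in s -> f v \in L v) /\ {in s &, injective f}.
Proof.
elim: s => [|x s IH] /=.
  by move=> _ _; exists (fun _ => 0); split.
move=> /andP [xs us] hs.
have [f [fL finj]] : exists f : T -> nat,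
    (forall v, v \in s -> f v \in L v) /\ {in s &, injective f}.
  apply: IH => // v; have := hs v; lia.
have [y yL yn] : exists2 y, y \in L x & y \notin map f s.
  case: (boolP (has (fun y => y \notin map f s) (L x))) => [/hasP//|/hasPn H].
  have sub : {subset undup (L x) <= map f s}.
    by move=> y; rewrite mem_undup => /H; rewrite negbK.
  have := uniq_leq_size (undup_uniq _) sub; rewrite size_map.
  have := hs x; rewrite /lsize; lia.
have nx : forall v, v \in s -> (v == x) = false.
  by move=> v vs; apply/eqP=> E; move: xs; rewrite -E vs.
exists (fun v => if v == x then y else f v); split.
  move=> v; rewrite inE => /orP [/eqP->|vs]; first by rewrite eqxx.
  by rewrite nx // fL.
move=> u v; rewrite !inE => /orP[/eqP->|hu] /orP[/eqP->|hv] //.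
- rewrite eqxx nx // => E; by move: yn; rewrite E map_f.
- rewrite eqxx nx // => E; by move: yn; rewrite -E map_f.
- rewrite !nx //; exact: finj.
Qed.

Lemma arith n k m chi : 1 <= k -> 2*k+2 <= n -> chi <= k -> m + 3 <= n ->
  maxn chi (ceil3 (m+chi-1)) <= ceil3 (n+k-1) - 1.
Proof. rewrite /ceil3; lia. Qed.

Lemma lsize_filter (c : nat) (s : seq nat) :
  lsize s - 1 <= lsize (filter (predC1 c) s).
Proof.
rewrite /lsize -filter_undup size_filter.
have := count_predC (pred1 c) (undup s).
have := count_uniq_mem c (undup_uniq s).
have -> : count (predC (pred1 c)) (undup s) = count (predC1 c) (undup s) by apply: eq_count.
case: (c \in undup s) => /= ->; lia.
Qed.

Theorem corollary12 (k n : nat) (p : 'I_n -> 'I_k) (L : 'I_n -> seq nat) :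
  1 <= k ->
  2 * k + 2 <= n ->
  (* exactly k nonempty parts: the parts are the fibres of p *)
  (forall i : 'I_k, exists v : 'I_n, p v = i) ->
  (forall v, ceil3 (n + k - 1) <= lsize (L v)) ->
  ~ L_colorable (cmp_adj p) L ->
  size (undup (flatten [seq L v | v <- enum 'I_n])) <= n - 1 ->
  (forall (m : nat) (e : rel 'I_m), m < n -> simple_graph e ->
     forall chi c, chromatic_number e chi -> choice_number e c ->
       c <= maxn chi (ceil3 (m + chi - 1))) ->
  forall (i : 'I_k) (c : nat),
    #|[set v : 'I_n | (p v == i) && (c \in L v)]| <= 2.
Proof.
move=> k1 hn hparts hL hnc _ hmin i c.
set S := [set v : 'I_n | (p v == i) && (c \in L v)].
rewrite leqNgt; apply/negP => hS3.
apply: hnc.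
set Sc := ~: S.
have hm : #|Sc| + #|S| = n by rewrite addnC cardsC card_ord.
pose g : 'I_#|Sc| -> 'I_n := fun j => @enum_val _ (mem Sc) j.
pose e' : rel 'I_#|Sc| := fun a b => p (g a) != p (g b).
have simp : simple_graph e'.
  by split; [move=> a b; rewrite /e' eq_sym | move=> a; rewrite /e' eqxx].
have [chi [chiP chimin]] : exists chi, k_colorable e' chi /\
    forall j, k_colorable e' j -> chi <= j.
  apply: ex_min; exists #|Sc|; exists id => x y H; apply/eqP=> E; move: H.
  by rewrite E /e' eqxx.
have chik : chi <= k.
  by apply: chimin; exists (fun a => p (g a)).
have [cc [ccP ccmin]] : exists cc, k_choosable e' cc /\
    forall j, k_choosable e' j -> cc <= j.
  apply: ex_min; exists #|Sc| => L0 hL0.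
  have [f [fL finj]] := @greedy _ L0 _ (enum_uniq 'I_#|Sc|)
     (fun v => eq_ind_r (fun x => x <= _) (hL0 v) (size_enum_ord _)).
  exists f; split.
    move=> x y exy; apply/eqP => E.
    have xy := finj x y (mem_enum _ x) (mem_enum _ y) E.
    by move: exy; rewrite xy /e' eqxx.
  by move=> v; apply: fL; rewrite mem_enum.
have hlt : #|Sc| < n by lia.
have hb := hmin #|Sc| e' hlt simp chi cc (conj chiP chimin) (conj ccP ccmin).
have hb2 := @arith n k #|Sc| chi k1 hn chik (ltac:(lia) : #|Sc| + 3 <= n).
pose L' := fun a => filter (predC1 c) (L (g a)).
have [f' [f'P f'L]] : L_colorable e' L'.
  apply: ccP => v; apply: leq_trans hb _; apply: leq_trans hb2 _.
  apply: leq_trans (lsize_filter c _); have := hL (g v); lia.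
pose f := fun v => if v \in S then c else
   if [pick j | g j == v] is Some j then f' j else 0.
have hf : forall v, v \notin S -> exists j, g j = v /\ f v = f' j.
  move=> v vS.
  have vSc : v \in Sc by rewrite inE.
  have ex : g (enum_rank_in vSc v) = v by rewrite /g enum_rankK_in.
  rewrite /f (negbTE vS); case: pickP => [j /eqP gj|none].
    by exists j.
  by move: (none (enum_rank_in vSc v)); rewrite ex eqxx.
have notc : forall j, f' j != c.
  by move=> j; have := f'L j; rewrite mem_filter => /andP[].
exists f; split.
  move=> x y; rewrite /cmp_adj => pxy.
  case: (boolP (x \in S)) => xS; case: (boolP (y \in S)) => yS.
  - move: xS yS; rewrite !inE => /andP[/eqP px _] /andP[/eqP py _].
    by move: pxy; rewrite px py eqxx.
  - have [j [gj ->]] := hf y yS; rewrite /f xS eq_sym; exact: notc.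
  - have [j [gj ->]] := hf x xS; rewrite /f yS; exact: notc.
  - have [jx [gx ->]] := hf x xS; have [jy [gy ->]] := hf y yS.
    by apply: f'P; rewrite /e' gx gy.
move=> v; case: (boolP (v \in S)) => vS.
  by rewrite /f vS; move: vS; rewrite inE => /andP[].
have [j [gj ->]] := hf v vS.
by have := f'L j; rewrite mem_filter gj => /andP[].
Qed.
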